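(* Let $p(y;\vec{\eta})=h(y)\exp(\vec{\eta}^T\vec{T}(y)-A(\vec{\eta}))$ be an exponential family distribution with sufficient statistics vector $\vec{T}(y)=(T_1(y),\dots,T_L(y))^T$ of length $L\in\mathbb{N}$, and consider the general ef-MCA model of the context with parameters $\Theta$ containing $\vec{\pi}$ and $L$ matrices $W^{(1)},\dots,W^{(L)}\in\mathbb{R}^{D\times H}$, data $\vec{y}^{(1)},\dots,\vec{y}^{(N)}$ and distributions $q^{(1)},\dots,q^{(N)}$ on $\{0,1\}^H$. Then the derivatives of the lower bound $$\mathcal{F}(q,\Theta)=\sum_{n=1}^N\sum_{\vec{s}\in\{0,1\}^H}q^{(n)}(\vec{s})\Big\{\sum_{d=1}^D\log p\big(y_d^{(n)};\vec{\tilde{\eta}}_d(\vec{s},\Theta)\big)+\sum_{h=1}^H\log p(s_h\mid\Theta)\Big\}+\mathcal{H}(q)$$ with respect to all $W^{(l)}_{dh}$ are zero if for all $d$, $h$ and $l$ $$W^{(l)}_{dh}=\frac{\sum_{n=1}^N\langle\mathcal{A}_{dh}(\vec{s},\Theta)\rangle_{q^{(n)}}\,T_l(y_d^{(n)})}{\sum_{n=1}^N\langle\mathcal{A}_{dh}(\vec{s},\Theta)\rangle_{q^{(n)}}}.$$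
   Context: $A$ is assumed finite. Mean value parameters: $\vec{w}=\langle\vec{T}(y)\rangle_{p(y;\vec{\eta})}\in\mathbb{R}^L$ (expectation under $p(\cdot;\vec{\eta})$); this map is assumed invertible with inverse $\vec{\Phi}$, i.e. $\vec{w}=\langle\vec{T}(y)\rangle_{p(y;\vec{\Phi}(\vec{w}))}$. Let $F(\vec{w})=\langle y\rangle_{p(y;\vec{\Phi}(\vec{w}))}$ and $M_{dh}(\Theta)=F(W^{(1)}_{dh},\dots,W^{(L)}_{dh})$. For $\vec{s}\in\{0,1\}^H$: $h(d,\vec{s},\Theta)=\mathrm{argmax}_h\{M_{dh}(\Theta)s_h\}$, $\bar{W}^{(l)}_d(\vec{s},\Theta)=W^{(l)}_{d\,h(d,\vec{s},\Theta)}$, and $\vec{\tilde{\eta}}_d(\vec{s},\Theta)=\vec{\Phi}(\bar{W}^{(1)}_d(\vec{s},\Theta),\dots,\bar{W}^{(L)}_d(\vec{s},\Theta))$. The model is $p(\vec{s}\mid\Theta)=\prod_h\pi_h^{s_h}(1-\pi_h)^{1-s_h}$ and $p(\vec{y}\mid\vec{s},\Theta)=\prod_{d=1}^D p(y_d;\vec{\tilde{\eta}}_d(\vec{s},\Theta))$. $\mathcal{H}(q)$ is the Shannon entropy of the $q^{(n)}$. $\mathcal{A}_{dh}(\vec{s},\Theta)=1$ if $h=h(d,\vec{s},\Theta)$ and $0$ otherwise; $\langle\cdot\rangle_{q^{(n)}}$ is expectation over $\vec{s}\sim q^{(n)}$. When differentiating, $\partial\bar{W}^{(l)}_d/\partial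 W^{(l)}_{dh}=\mathcal{A}_{dh}$, $\partial\bar{W}^{(k)}_d/\partial W^{(l)}_{dh}=0$ for $k\neq l$, and the $q^{(n)}$ are held fixed. *)

(* Defs.v *)
From HB Require Import structures.
From mathcomp Require Import all_boot all_order all_algebra.
From mathcomp Require Import all_classical all_reals all_analysis.
Set Implicit Arguments. Unset Strict Implicit. Unset Printing Implicit Defensive.
Import Order.TTheory GRing.Theory Num.Theory.
Import numFieldNormedType.Exports.
Local Open Scope ring_scope.

Section EfMCA.
Variables (R : realType) (Y : finType) (L : nat).

(* Y : the finite value set A (a finite set of reals via yv);
   hb : base measure h(y); T : sufficient statistics T(y) as a row vector. *)
Variables (yv : Y -> R) (hb : Y -> R) (T : Y -> 'rV[R]_L).

Definition dotv (a b : 'rV[R]_L) : R := \sum_(k < L) a ord0 k * b ord0 k.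

Definition logA (eta : 'rV[R]_L) : R := ln (\sum_(y : Y) hb y * expR (dotv eta (T y))).

Definition pdf (y : Y) (eta : 'rV[R]_L) : R := hb y * expR (dotv eta (T y) - logA eta).

Definition meanmap (eta : 'rV[R]_L) : 'rV[R]_L := \sum_(y : Y) pdf y eta *: T y.

Variable Phi : 'rV[R]_L -> 'rV[R]_L.   (* inverse of meanmap *)

Definition Fmean (w : 'rV[R]_L) : R := \sum_(y : Y) pdf y (Phi w) * yv y.

Variables (D H N : nat).
Variables (pi : 'I_H -> R) (W : 'I_D -> 'I_H -> 'rV[R]_L).
(* W d h = (W^(1)_{dh}, ..., W^(L)_{dh}) *)

Definition Mdh (d : 'I_D) (h : 'I_H) : R := Fmean (W d h).

Definition sval (s : {ffun 'I_H -> bool}) (h : 'I_H) : R := (s h)%:R.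

(* h(d,s,Theta) = argmax_h { M_dh s_h } (ties broken by [pick]) *)
Definition hsel (d : 'I_D) (s : {ffun 'I_H -> bool}) : option 'I_H :=
  [pick h | [forall j, Mdh d j * sval s j <= Mdh d h * sval s h]].

Definition Aind (d : 'I_D) (h : 'I_H) (s : {ffun 'I_H -> bool}) : R :=
  (hsel d s == Some h)%:R.

Definition Wbar (d : 'I_D) (s : {ffun 'I_H -> bool}) : 'rV[R]_L :=
  match hsel d s with Some h => W d h | None => 0 end.

Variables (ys : 'I_N -> 'I_D -> Y) (q : 'I_N -> {ffun 'I_H -> bool} -> R).

Definition logprior (s : {ffun 'I_H -> bool}) (h : 'I_H) : R :=
  sval s h * ln (pi h) + (1 - sval s h) * ln (1 - pi h).

Definition entropy : R := - \sum_(n < N) \sum_(s : {ffun 'I_H -> bool}) q n s * ln (q n s).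

(* The free energy written as a function of the variables bar W_d(s)
   (one independent vector per s and d), with eta~_d(s) = Phi(bar W_d(s)). *)
Definition Fbar (Wb : {ffun 'I_H -> bool} -> 'I_D -> 'rV[R]_L) : R :=
  \sum_(n < N) \sum_(s : {ffun 'I_H -> bool})
     q n s * (\sum_(d < D) ln (pdf (ys n d) (Phi (Wb s d)))
              + \sum_(h < H) logprior s h)
  + entropy.

Definition Fbound : R := Fbar (fun s d => Wbar d s).

Definition evec (l : 'I_L) : 'rV[R]_L := \row_(k < L) (k == l)%:R.

(* Variation of F along W^(l)_{dh} with the convention of the paper:
   d bar W^(l)_{d'}(s) / d W^(l)_{dh} = [d' = d] A_dh(s), the other
   components of bar W are unaffected, and q is held fixed.  The derivative
   of F w.r.t. W^(l)_{dh} is the derivative of this function at t = 0. *)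
Definition Fpath (d : 'I_D) (h : 'I_H) (l : 'I_L) (t : R) : R :=
  Fbar (fun s d' => Wbar d' s + (t * (d' == d)%:R * Aind d h s) *: evec l).

Definition EA (n : 'I_N) (d : 'I_D) (h : 'I_H) : R :=
  \sum_(s : {ffun 'I_H -> bool}) q n s * Aind d h s.

End EfMCA.

(* Main.v *)
Require Import Defs.
From HB Require Import structures.
From mathcomp Require Import all_boot all_order all_algebra.
From mathcomp Require Import all_classical all_reals all_analysis.
From mathcomp Require Import ring.
Import Order.TTheory GRing.Theory Num.Theory.
Import numFieldNormedType.Exports.
Local Open Scope ring_scope.

Section Helpers.
Set Implicit Arguments. Unset Strict Implicit.
Lemma is_derive_sumf (R : realType) (I : finType) (f : I -> R -> R) (df : I -> R) (x : R) :
  (forall i, is_derive x 1 (f i) (df i)) ->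
  is_derive x 1 (fun t => \sum_(i : I) f i t) (\sum_(i : I) df i).
Proof.
move=> H.
have -> : (fun t => \sum_(i : I) f i t) = \sum_(i : I) f i.
  by apply/funext => t; rewrite fct_sumE.
by elim/big_ind2 : _ => // [|] *; [exact: is_derive_cst|exact: is_deriveD].
Qed.

Lemma is_derive_mull (R : realType) (f : R -> R) (k df x : R) :
  is_derive x 1 f df -> is_derive x 1 (fun t => k * f t) (k * df).
Proof.
move=> H; have := is_deriveZ k H.
by [].
Qed.

Lemma is_derive_mulr (R : realType) (f : R -> R) (k df x : R) :
  is_derive x 1 f df -> is_derive x 1 (fun t => f t * k) (df * k).
Proof.
move=> H; have -> : (fun t => f t * k) = (fun t => k * f t) by apply/funext=> t; rewrite mulrC.
by rewrite mulrC; apply: is_derive_mull.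
Qed.

Lemma is_derive_cstf (R : realType) (k x : R) :
  is_derive x 1 (fun _ : R => k) 0.
Proof. exact: is_derive_cst. Qed.

Lemma is_derive_expRf (R : realType) (f : R -> R) (df x : R) :
  is_derive x 1 f df -> is_derive x 1 (fun t => expR (f t)) (expR (f x) * df).
Proof. move=> H; exact: (@is_derive1_comp R expR f x). Qed.

Lemma is_derive_lnf (R : realType) (f : R -> R) (df x : R) :
  0 < f x -> is_derive x 1 f df -> is_derive x 1 (fun t => ln (f t)) ((f x)^-1 * df).
Proof. move=> p H; exact: (@is_derive1_comp R (@ln R) f x _ _ (is_derive1_ln p) H). Qed.
Lemma is_deriveDf (R : realType) (f g : R -> R) (df dg x : R) :
  is_derive x 1 f df -> is_derive x 1 g dg -> is_derive x 1 (fun t => f t + g t) (df + dg).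
Proof. move=> A B; exact: is_deriveD. Qed.
Lemma is_deriveBf (R : realType) (f g : R -> R) (df dg x : R) :
  is_derive x 1 f df -> is_derive x 1 g dg -> is_derive x 1 (fun t => f t - g t) (df - dg).
Proof. move=> A B; exact: is_deriveB. Qed.
Lemma is_derive_ext (R : realType) (f g : R -> R) (x df : R) :
  (forall t, f t = g t) -> is_derive x 1 g df -> is_derive x 1 f df.
Proof. by move=> E; have -> : f = g by apply/funext. Qed.

Lemma lnpdfE (R : realType) (Y : finType) (L : nat) (hb : Y -> R) (T : Y -> 'rV[R]_L) y eta :
  (forall y, 0 < hb y) ->
  ln (pdf hb T y eta) = ln (hb y) + dotv eta (T y) - logA hb T eta.
Proof.
move=> hp; rewrite /pdf lnM ?expRK ?addrA // posrE ?expR_gt0 //.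
Qed.

Lemma Zgt0 (R : realType) (Y : finType) (L : nat) (hb : Y -> R) (T : Y -> 'rV[R]_L) (y0 : Y) eta :
  (forall y, 0 < hb y) -> 0 < \sum_(y : Y) hb y * expR (dotv eta (T y)).
Proof.
move=> hp; rewrite (bigD1 y0) //= ltr_wpDr ?mulr_gt0 ?expR_gt0 //.
by apply: sumr_ge0 => i _; rewrite mulr_ge0 ?expR_ge0 // ltW.
Qed.

Lemma deriv_lnpdf (R : realType) (Y : finType) (L : nat) (hb : Y -> R) (T : Y -> 'rV[R]_L)
  (y : Y) (g : R -> 'rV[R]_L) (c' : 'I_L -> R) :
  (forall y, 0 < hb y) -> (forall k, is_derive (0:R) 1 (fun t => g t ord0 k) (c' k)) ->
  is_derive (0:R) 1 (fun t => ln (pdf hb T y (g t)))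
    (\sum_(k < L) c' k * (T y ord0 k - meanmap hb T (g 0) ord0 k)).
Proof.
move=> hp Dc.
pose Zf t := \sum_(y' : Y) hb y' * expR (dotv (g t) (T y')).
have -> : (fun t => ln (pdf hb T y (g t))) = fun t => ln (hb y) + dotv (g t) (T y) - ln (Zf t).
  by apply/funext => t; rewrite lnpdfE.
have Dd y' : is_derive (0:R) 1 (fun t => dotv (g t) (T y')) (\sum_k c' k * T y' ord0 k).
  by rewrite /dotv; apply: is_derive_sumf => k; apply: is_derive_mulr.
have DZ : is_derive (0:R) 1 Zf (\sum_y' hb y' * (expR (dotv (g 0) (T y')) * \sum_k c' k * T y' ord0 k)).
  by apply: is_derive_sumf => y'; apply: is_derive_mull; apply: is_derive_expRf.
have Z0 : 0 < Zf 0 by exact: (@Zgt0 _ _ _ hb T y (g 0) hp).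
have HH := is_deriveBf (is_deriveDf (is_derive_cstf (ln (hb y)) 0) (Dd y)) (is_derive_lnf Z0 DZ).
apply: (is_derive_eq HH).
rewrite add0r.
under [RHS]eq_bigr do rewrite mulrBr.
rewrite sumrB; congr (_ - _).
have mE k : (meanmap hb T (g 0)) ord0 k = \sum_(y' : Y) pdf hb T y' (g 0) * T y' ord0 k.
  by rewrite /meanmap summxE; apply: eq_bigr => i _; rewrite mxE.
under [RHS]eq_bigr do rewrite mE.
under [RHS]eq_bigr do rewrite mulr_sumr.
rewrite mulr_sumr [RHS]exchange_big /=.
apply eq_bigr => y' _.
rewrite !mulr_sumr; apply: eq_bigr => k _.
rewrite /pdf /logA -/(Zf 0) expRD expRN lnK ?posrE //.
by ring.
Qed.

End Helpers.

Theorem theorem2 (R : realType) (Y : finType) (L : nat)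
  (yv : Y -> R) (hb : Y -> R) (T : Y -> 'rV[R]_L)
  (Phi : 'rV[R]_L -> 'rV[R]_L)
  (D H N : nat) (pi : 'I_H -> R) (W : 'I_D -> 'I_H -> 'rV[R]_L)
  (ys : 'I_N -> 'I_D -> Y) (q : 'I_N -> {ffun 'I_H -> bool} -> R) :
  injective yv ->
  (forall y, 0 < hb y) ->
  (* Phi is the inverse of the mean value map *)
  (forall eta, Phi (meanmap hb T eta) = eta) ->
  (forall w, w \in range (meanmap hb T) -> differentiable Phi w) ->
  (forall d h, W d h \in range (meanmap hb T)) ->
  (forall h, 0 < pi h < 1) ->
  (forall n s, 0 <= q n s) ->
  (forall n, \sum_(s : {ffun 'I_H -> bool}) q n s = 1) ->
  (forall d h l,
     W d h ord0 l =
       (\sum_(n < N) EA yv hb T Phi W q n d h * T (ys n d) ord0 l)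
       / (\sum_(n < N) EA yv hb T Phi W q n d h)) ->
  forall d h l,
    is_derive (0 : R) 1
      (Fpath yv hb T Phi pi W ys q d h l) 0.
Proof.
move=> _ hbp PhiK Phid Wr _ qp _ Wfix d h l.
set w0 := W d h.
pose g (t : R) := Phi (w0 + t *: (@evec R L l)).
pose c' k := 'D_1 (fun t => g t ord0 k) (0:R).
have Dc k : is_derive (0:R) 1 (fun t => g t ord0 k) (c' k).
  apply: derivableP; apply/derivable1_diffP.
  have -> : (fun t => g t ord0 k) =
     (fun N : 'rV[R]_L => N ord0 k) \o (Phi \o (fun t : R => w0 + t *: (@evec R L l))).
    by apply/funext.
  apply: differentiable_comp; last exact: differentiable_coord.
  apply: differentiable_comp.
    apply: differentiableD => //; apply: differentiableZl => //.
  by rewrite /= scale0r addr0; apply: Phid; apply: Wr.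
have mE : meanmap hb T (g 0) = w0.
  rewrite /g scale0r addr0.
  by move: (Wr d h); rewrite inE => -[eta _ Ee]; rewrite /w0 -Ee PhiK.
pose ell (y : Y) := \sum_(k < L) c' k * (T y ord0 k - w0 ord0 k).
have K : forall n s d', is_derive (0:R) 1
   (fun t => ln (pdf hb T (ys n d') (Phi (Wbar yv hb T Phi W d' s +
        (t * (d' == d)%:R * Aind yv hb T Phi W d h s) *: (@evec R L l)))))
   (if d' == d then Aind yv hb T Phi W d h s * ell (ys n d) else 0).
  move=> n s d'.
  case: eqP => [->|nd].
    rewrite /Aind /Wbar.
    case: eqP => [hE|nh].
      rewrite hE /= mul1r.
      have := @deriv_lnpdf R Y L hb T (ys n d) g c' hbp Dc; rewrite mE => HD.
      by apply: (is_derive_ext _ HD) => t; rewrite !mulr1.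
    rewrite mul0r; apply: (is_derive_ext _ (is_derive_cstf _ 0)) => t.
    by rewrite /= mulr0 scale0r addr0.
  apply: (is_derive_ext _ (is_derive_cstf _ 0)) => t.
  by rewrite /= mulr0 mul0r scale0r addr0.
have HH := is_deriveDf (is_derive_sumf (fun n => is_derive_sumf (fun s =>
    is_derive_mull (q n s) (is_deriveDf (is_derive_sumf (fun d' => K n s d'))
      (is_derive_cstf (\sum_(h0 < H) logprior pi s h0) 0))))) (is_derive_cstf (entropy q) 0).
rewrite /Fpath /Fbar.
apply: (is_derive_eq HH).
rewrite addr0.
under eq_bigr => n _ do under eq_bigr => s _ do rewrite addr0 -big_mkcond big_pred1_eq mulrA.
under eq_bigr => n _ do rewrite -mulr_suml.
have EAE n : \sum_i q n i * Aind yv hb T Phi W d h i = EA yv hb T Phi W q n d h by [].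
under eq_bigr do rewrite EAE.
rewrite /ell.
under eq_bigr do rewrite mulr_sumr.
rewrite exchange_big /=; apply: big1 => k _.
set SE := \sum_(n < N) EA yv hb T Phi W q n d h.
set ST := \sum_(n < N) EA yv hb T Phi W q n d h * T (ys n d) ord0 k.
have -> : \sum_(n < N) EA yv hb T Phi W q n d h * (c' k * (T (ys n d) ord0 k - w0 ord0 k))
   = c' k * (ST - SE * w0 ord0 k).
  rewrite /ST /SE mulr_suml -sumrB mulr_sumr; apply: eq_bigr => n _; ring.
suff -> : ST - SE * w0 ord0 k = 0 by rewrite mulr0.
have EA0 n : 0 <= EA yv hb T Phi W q n d h.
  by apply: sumr_ge0 => s _; rewrite mulr_ge0 ?qp ?ler0n.
rewrite /w0 Wfix -/SE -/ST.
have [SE0|SEn0] := eqVneq SE 0.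
  have all0 := psumr_eq0P (fun n _ => EA0 n) SE0.
  rewrite SE0 mul0r subr0 /ST big1 // => n _.
  by rewrite all0 ?mul0r.
by rewrite mulrC divfK // subrr.
Qed.
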